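(* Let $(T,f,\sqsubseteq_L)$ be a leaf-ordered merge tree. For $h\ge0$ define the relation $\le_h$ on $\mathbb{L}_h$ by: $x_1\le_h x_2$ iff $x_1=x_2$ or $u_1\sqsubseteq_L u_2$ for all leaves $u_1\in L(T_{x_1})$ and $u_2\in L(T_{x_2})$. Then for each $h\ge0$, $\le_h$ is a total order on $\mathbb{L}_h$.
   Context: A merge tree $(T,f)$: a finite rooted tree $T$ identified with its topological realisation, with a continuous $f\colon T\to\mathbb{R}\cup\{\infty\}$ strictly increasing towards the root, $f(v)=\infty$ iff $v$ is the root; lowest leaf at height $0$; $L(T)$ is the set of leaves and $L(T_x)$ the leaves in the subtree $T_x$ of descendants of $x$ (descendant: reachable by an $f$-decreasing path). $\mathrm{lca}$ is the lowest common ancestor; $\mathbb{L}_h=\{x:f(x)=h\}$. A leaf-order is a total order $\sqsubseteq_L$ on $L(T)$ that separates subtrees: for leaves $u,u_1,u_2$ with $u_1\sqsubseteq_L u\sqsubseteq_L u_2$, $u\in T_{\mathrm{lca}(u_1,u_2)}$. A leaf-ordered merge tree is $(T,f,\sqsubseteq_L)$. *)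

(* Defs.v *)
From mathcomp Require Import all_boot all_order all_algebra.
From mathcomp Require Import reals.
Set Implicit Arguments. Unset Strict Implicit. Unset Printing Implicit Defensive.
Import Order.TTheory GRing.Theory Num.Theory.
Local Open Scope ring_scope.

(* A merge tree: a finite rooted tree (vertex set V, parent map towards the
   root) with a height function on vertices, strictly increasing towards the
   root; the root has height +oo (its value [mt_h root] is ignored).
   The topological realisation is encoded in [point] below: every point of the
   realisation is either a vertex, or an interior point of the edge from a
   non-root vertex v to its parent, determined by its height h
   (f v < h < f (parent v)); since f is continuous and strictly increasing
   along each edge, this parametrisation of edge points by height is
   a homeomorphism. *)
Record mtree (R : realType) := MTree {
  mt_V : finType;
  mt_root : mt_V;
  mt_parent : mt_V -> mt_V;
  mt_h : mt_V -> R;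
  mt_parent_root : mt_parent mt_root = mt_root;
  mt_reach_root : forall v, exists n, iter n mt_parent v = mt_root;
  mt_incr : forall v, v != mt_root -> mt_parent v != mt_root ->
            mt_h v < mt_h (mt_parent v);
  mt_low : exists u, [/\ u != mt_root, (forall w, mt_parent w != u) & mt_h u = 0];
  mt_leaves_nonneg : forall u, u != mt_root -> (forall w, mt_parent w != u) ->
            0 <= mt_h u
}.

Section MergeTree.
Variables (R : realType) (T : mtree R).
Local Notation V := (mt_V T).
Local Notation root := (@mt_root R T).
Local Notation par := (@mt_parent R T).
Local Notation hv := (@mt_h R T).

Definition leaf (u : V) : Prop := u != root /\ forall w, par w != u.

Definition vanc (w v : V) : Prop := exists n, iter n par v = w.

Inductive point := Vert of V | Edge of V & R.

Definition is_point (x : point) : Prop :=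
  match x with
  | Vert _ => True
  | Edge v h => [/\ v != root, hv v < h & (par v = root \/ h < hv (par v))]
  end.

Definition lowv (x : point) : V := match x with Vert v => v | Edge v _ => v end.

Definition in_level (h : R) (x : point) : Prop :=
  is_point x /\
  match x with Vert v => v != root /\ hv v = h | Edge _ h' => h' = h end.

(* f(x) <= f(y), with f(root) = +oo *)
Definition fle (x y : point) : Prop :=
  match y with
  | Vert w => w = root \/
              match x with
              | Vert v => v != root /\ hv v <= hv w
              | Edge _ h => h <= hv w end
  | Edge _ h' => match x with
                 | Vert v => v != root /\ hv v <= h'
                 | Edge _ h => h <= h' end
  end.

(* [desc x y]: x is a descendant of y, i.e. y lies on the f-increasing path
   from x to the root (equivalently x is reachable from y along an
   f-decreasing path). *)
Definition desc (x y : point) : Prop := vanc (lowv y) (lowv x) /\ fle x y.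

Definition is_lca (z x y : point) : Prop :=
  [/\ is_point z, desc x z, desc y z &
      forall z', is_point z' -> desc x z' -> desc y z' -> desc z z'].

Definition leaf_below (u : V) (x : point) : Prop := leaf u /\ desc (Vert u) x.

(* a leaf order: a total order on L(T) separating subtrees *)
Definition leaf_order (ord : V -> V -> Prop) : Prop :=
  [/\ (forall u, leaf u -> ord u u),
      (forall u1 u2, leaf u1 -> leaf u2 -> ord u1 u2 -> ord u2 u1 -> u1 = u2),
      (forall u1 u2 u3, leaf u1 -> leaf u2 -> leaf u3 ->
          ord u1 u2 -> ord u2 u3 -> ord u1 u3),
      (forall u1 u2, leaf u1 -> leaf u2 -> ord u1 u2 \/ ord u2 u1) &
      (forall u1 u u2 z, leaf u1 -> leaf u -> leaf u2 ->
          ord u1 u -> ord u u2 -> is_lca z (Vert u1) (Vert u2) ->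
          desc (Vert u) z)].

Definition le_h (ord : V -> V -> Prop) (x1 x2 : point) : Prop :=
  x1 = x2 \/
  forall u1 u2, leaf_below u1 x1 -> leaf_below u2 x2 -> ord u1 u2.

End MergeTree.

Definition total_order_on (P : Type) (A : P -> Prop) (r : P -> P -> Prop) :=
  [/\ (forall x, A x -> r x x),
      (forall x y, A x -> A y -> r x y -> r y x -> x = y),
      (forall x y z, A x -> A y -> A z -> r x y -> r y z -> r x z) &
      (forall x y, A x -> A y -> r x y \/ r y x)].

(* Main.v *)
Require Import Defs.
From mathcomp Require Import all_boot all_order all_algebra.
From mathcomp Require Import reals boolp.
From Stdlib Require Import Classical.
Import Order.TTheory GRing.Theory Num.Theory.
Local Open Scope ring_scope.
Set Implicit Arguments. Unset Strict Implicit.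

Local Notation par T := (@mt_parent _ T).
Local Notation rt T := (@mt_root _ T).
Local Notation hv T := (@mt_h _ T).

Lemma iter_root (R : realType) (T : mtree R) n : iter n (par T) (rt T) = rt T.
Proof. elim: n => //= n ->; exact: mt_parent_root. Qed.

Lemma vanc_root (R : realType) (T : mtree R) (b : mt_V T) : vanc b (rt T) -> b = rt T.
Proof. by case=> n <-; rewrite iter_root. Qed.

Lemma vanc_refl (R : realType) (T : mtree R) (b : mt_V T) : vanc b b.
Proof. by exists 0%N. Qed.

Lemma vanc_trans (R : realType) (T : mtree R) (a b c : mt_V T) :
  vanc b a -> vanc c b -> vanc c a.
Proof. by case=> m <- [n <-]; exists (n + m)%N; rewrite iterD. Qed.

Lemma vanc_nonroot (R : realType) (T : mtree R) (a b : mt_V T) :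
  vanc b a -> b != rt T -> a != rt T.
Proof. move=> H Hb; apply/eqP => E; move: H; rewrite E => /vanc_root E'. by rewrite E' eqxx in Hb. Qed.

Lemma mono (R : realType) (T : mtree R) (a : mt_V T) n :
  iter n (par T) a != rt T -> hv T a <= hv T (iter n (par T) a).
Proof.
elim: n => [|n IH] /=; first by rewrite lexx.
move=> Hp.
have Hn : iter n (par T) a != rt T.
  by apply/eqP => E; rewrite E mt_parent_root eqxx in Hp.
apply: le_trans (IH Hn) _; apply/ltW; exact: mt_incr.
Qed.

Lemma vmono (R : realType) (T : mtree R) (a b : mt_V T) :
  vanc b a -> b != rt T -> hv T a <= hv T b.
Proof. by case=> n <-; apply: mono. Qed.

Lemma smono (R : realType) (T : mtree R) (a : mt_V T) n :
  iter n.+1 (par T) a != rt T -> hv T (par T a) <= hv T (iter n.+1 (par T) a).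
Proof. rewrite iterSr; exact: mono. Qed.

Lemma chain (R : realType) (T : mtree R) (p q u : mt_V T) :
  vanc p u -> vanc q u -> (exists k, iter k (par T) p = q) \/ (exists k, iter k (par T) q = p).
Proof.
case=> a <- [b <-]; case: (leqP a b) => Hab.
  left; exists (b - a)%N; by rewrite -iterD subnK.
right; exists (a - b)%N; by rewrite -iterD subnK // ltnW.
Qed.

Lemma level_props (R : realType) (T : mtree R) h (x : point T) : in_level h x ->
  [/\ lowv x != rt T, hv T (lowv x) <= h & (par T (lowv x) = rt T \/ h < hv T (par T (lowv x)))].
Proof.
case: x => [v|v h'] /= [].
  move=> _ [Hv <-]; split => //.
  case: (eqVneq (par T v) (rt T)) => E; [by left | right; exact: mt_incr].
by move=> [Hv Hl Hp] E; subst h'; split => //; apply/ltW.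
Qed.

Lemma no_strict (R : realType) (T : mtree R) h (x1 x2 : point T) k :
  in_level h x1 -> in_level h x2 -> iter k.+1 (par T) (lowv x1) = lowv x2 -> False.
Proof.
move=> /level_props [N1 L1 P1] /level_props [N2 L2 P2] E.
have Hp : par T (lowv x1) != rt T.
  apply: (vanc_nonroot (b := lowv x2)) => //; exists k; by rewrite -iterSr.
have := smono (a := lowv x1) (n := k); rewrite E => /(_ N2) H.
case: P1 => [E1|H1]; first by rewrite E1 eqxx in Hp.
have : h < h by apply: lt_le_trans H1 (le_trans H L2).
by rewrite ltxx.
Qed.

Lemma same_low (R : realType) (T : mtree R) h (x1 x2 : point T) :
  in_level h x1 -> in_level h x2 -> lowv x1 = lowv x2 -> x1 = x2.
Proof.
case: x1 => [v1|v1 h1]; case: x2 => [v2|v2 h2] /= [P1 H1] [P2 H2] E; subst v2.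
- by [].
- case: H1 => _ E1; case: P2 => _ Hl _; subst h2.
  by move: Hl; rewrite E1 ltxx.
- case: H2 => _ E1; case: P1 => _ Hl _; subst h1.
  by move: Hl; rewrite E1 ltxx.
- by subst.
Qed.

Lemma level_unique (R : realType) (T : mtree R) h (x1 x2 : point T) u :
  in_level h x1 -> in_level h x2 -> vanc (lowv x1) u -> vanc (lowv x2) u -> x1 = x2.
Proof.
move=> L1 L2 V1 V2; case: (chain V1 V2) => [[[|k] E]|[[|k] E]].
- exact: (same_low L1 L2 E).
- by case: (no_strict L1 L2 E).
- exact: (same_low L1 L2 (esym E)).
- by case: (no_strict L2 L1 E).
Qed.

Lemma leaf_exists_aux (R : realType) (T : mtree R) n (v : mt_V T) :
  (#|[set w | (hv T w < hv T v)%R]| <= n)%N -> v != rt T -> exists u, leaf u /\ vanc v u.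
Proof.
elim: n v => [|n IH] v Hc Hv.
  case: (classic (exists w, par T w = v)) => [[c Hc']|Hn].
    have Hcr : c != rt T by apply/eqP => E; rewrite E mt_parent_root in Hc'; rewrite -Hc' eqxx in Hv.
    have Hlt : hv T c < hv T v by rewrite -Hc'; apply: mt_incr => //; rewrite Hc'.
    have H0 : (0 < #|[set w | (hv T w < hv T v)%R]|)%N by apply/card_gt0P; exists c; rewrite inE.
    by move: Hc; rewrite leqNgt H0.
  exists v; split; last exact: vanc_refl.
  split => // w; apply/eqP => E; apply: Hn; by exists w.
case: (classic (exists w, par T w = v)) => [[c Hc']|Hn].
  have Hcr : c != rt T by apply/eqP => E; rewrite E mt_parent_root in Hc'; rewrite -Hc' eqxx in Hv.
  have Hlt : hv T c < hv T v by rewrite -Hc'; apply: mt_incr => //; rewrite Hc'.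
  have Hpr : [set w | hv T w < hv T c] \proper [set w | hv T w < hv T v].
    apply/properP; split.
      by apply/subsetP => w; rewrite !inE => H; apply: lt_trans H Hlt.
    by exists c; rewrite !inE ?ltxx.
  have := proper_card Hpr => Hc2.
  case: (IH c _ Hcr) => [|u [Lu Vu]].
    by rewrite -ltnS; apply: leq_trans Hc2 Hc.
  exists u; split => //; apply: vanc_trans Vu _; by exists 1%N.
exists v; split; last exact: vanc_refl.
split => // w; apply/eqP => E; apply: Hn; by exists w.
Qed.

Lemma leaf_exists (R : realType) (T : mtree R) (v : mt_V T) :
  v != rt T -> exists u, leaf u /\ vanc v u.
Proof. exact: leaf_exists_aux (leqnn _). Qed.

Lemma leaf_below_exists (R : realType) (T : mtree R) h (x : point T) :
  in_level h x -> exists u, leaf_below u x.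
Proof.
move=> L; have [N _ _] := level_props L.
case: (leaf_exists N) => u [Lu Vu]; exists u; split => //; split => //.
have Hu : u != rt T by case: Lu.
have Hm := vmono Vu N.
case: x L N Vu Hm => [v|v h'] /= L N Vu Hm; first by right.
by split => //; case: L => [[_ H _] _]; apply: le_trans Hm (ltW H).
Qed.

Lemma fle_trans (R : realType) (T : mtree R) (x y z : point T) :
  fle x y -> fle y z -> fle x z.
Proof.
case: x => [a|a ha]; case: y => [b|b hb]; case: z => [c|c hc] /=.
all: try (case: (eqVneq c (rt T)) => [->|Hc]; [by left|]).
all: try (case: (eqVneq b (rt T)) => [->|Hb]).
all: rewrite ?eqxx /=.
all: move=> H1 H2.
all: try (case: H2 => [E|H2]; [by rewrite E eqxx in Hc|]).
all: try (by case: H2).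
all: try (case: H2 => _ H2).
all: try (case: H1 => [E|H1]; [by rewrite E eqxx in Hb|]).
all: try (case: H1 => Ha H1).
all: try right.
all: try (split; first done).
all: apply: le_trans H1 H2.
Qed.

Lemma desc_trans (R : realType) (T : mtree R) (x y z : point T) :
  desc x y -> desc y z -> desc x z.
Proof.
case=> V1 F1 [V2 F2]; split; [exact: vanc_trans V1 V2 | exact: fle_trans F1 F2].
Qed.

Lemma lca_exists (R : realType) (T : mtree R) (u1 u2 : mt_V T) :
  exists z, is_lca z (Vert u1) (Vert u2).
Proof.
have exP : exists n, `[< vanc (iter n (par T) u1) u2 >].
  case: (mt_reach_root u1) => n En; exists n; apply/asboolP; rewrite En.
  case: (mt_reach_root u2) => m Em; by exists m.
case: (ex_minnP exP) => n /asboolP Hn Hmin.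
set w := iter n (par T) u1 in Hn *.
have Vw1 : vanc w u1 by exists n.
have Fle : forall u, vanc w u -> fle (Vert u) (Vert w).
  move=> u Vu /=; case: (eqVneq w (rt T)) => [E|Hw]; first by left.
  by right; split; [apply: vanc_nonroot Vu Hw | apply: vmono Vu Hw].
exists (Vert w); split => //.
- by split => //; apply: Fle.
- by split => //; apply: Fle.
move=> z' Pz [[m Em] _] [V2 _].
have Hnm : (n <= m)%N by apply: Hmin; apply/asboolP; rewrite Em.
have Vz : vanc (lowv z') w by exists (m - n)%N; rewrite /w -iterD subnK.
split => //.
case: z' Pz Em V2 Vz => [c|c hc] /= Pz Em V2 Vz.
  case: (eqVneq c (rt T)) => [E|Hc]; first by left.
  by right; split; [apply: vanc_nonroot Vz Hc | apply: vmono Vz Hc].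
case: Pz => Hc Hlt _.
split; first by apply: vanc_nonroot Vz Hc.
exact: le_trans (vmono Vz Hc) (ltW Hlt).
Qed.

Lemma interval (R : realType) (T : mtree R) (ord : mt_V T -> mt_V T -> Prop)
  (Hord : leaf_order ord) (u1 u u2 : mt_V T) (x : point T) :
  leaf u -> ord u1 u -> ord u u2 -> is_point x ->
  leaf_below u1 x -> leaf_below u2 x -> leaf_below u x.
Proof.
case: Hord => _ _ _ _ Hsep Lu O1 O2 Px [L1 D1] [L2 D2].
case: (lca_exists u1 u2) => z Hz.
have Duz := Hsep _ _ _ _ L1 Lu L2 O1 O2 Hz.
case: Hz => _ _ _ Hmin.
split => //; apply: desc_trans Duz (Hmin _ Px D1 D2).
Qed.

Theorem lemma5 (R : realType) (T : mtree R) (ord : mt_V T -> mt_V T -> Prop)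
  (Hord : @leaf_order R T ord) (h : R) (h0 : 0 <= h) :
  total_order_on (@in_level R T h) (@le_h R T ord).
Proof.
have Hord' := Hord.
case: Hord' => Hrefl Hanti Htrans Htot Hsep.
have Luniq : forall (x y : point T) (u : mt_V T), in_level h x -> in_level h y -> leaf_below u x -> leaf_below u y -> x = y.
  move=> x y u Lx Ly [_ Dx] [_ Dy]; case: Dx => Vx _; case: Dy => Vy _.
  exact: level_unique Lx Ly Vx Vy.
split.
- by move=> x _; left.
- move=> x y Lx Ly [//|Hxy] [E|Hyx]; first by [].
  case: (leaf_below_exists Lx) => u Bu; case: (leaf_below_exists Ly) => v Bv.
  have E : u = v by apply: Hanti; [case: Bu|case: Bv|apply: Hxy|apply: Hyx].
  subst v; exact: Luniq Lx Ly Bu Bv.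
- move=> x y z Lx Ly Lz [Exy|Hxy]; first by subst.
  case=> [Eyz|Hyz]; first by subst; right.
  right => u1 u3 B1 B3.
  case: (leaf_below_exists Ly) => u2 B2.
  apply: (Htrans _ u2); [case: B1|case: B2|case: B3|apply: Hxy|apply: Hyz] => //.
move=> x y Lx Ly.
case: (classic (x = y)) => [E|Nxy]; first by left; left.
have Px : is_point x by case: Lx.
have Py : is_point y by case: Ly.
case: (classic (forall u1 u2, leaf_below u1 x -> leaf_below u2 y -> ord u1 u2)) => [H|H].
  by left; right.
right; right => b' a' Bb' Ba'.
have [a [b [Ba Bb Nab]]] : exists a b, [/\ leaf_below a x, leaf_below b y & ~ ord a b].
  apply: NNPP => Hn; apply: H => a b Ba Bb; apply: NNPP => Nab; apply: Hn.
  by exists a, b.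
have La : leaf a by case: Ba.
have Lb : leaf b by case: Bb.
have La' : leaf a' by case: Ba'.
have Lb' : leaf b' by case: Bb'.
have Oba : ord b a by case: (Htot _ _ La Lb) => // /Nab.
case: (Htot _ _ Lb' La') => // Oab'.
exfalso.
case: (Htot _ _ La' Lb) => [Oa'b|Oba'].
  have Bbx : leaf_below b x := interval Hord Lb Oa'b Oba Px Ba' Ba.
  by apply: Nxy; apply: Luniq Lx Ly Bbx Bb.
have Ba'y : leaf_below a' y := interval Hord La' Oba' Oab' Py Bb Bb'.
by apply: Nxy; apply: Luniq Lx Ly Ba' Ba'y.
Qed.
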